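(* Let $\mathcal{V}$ be a non-trivial quantale, $\mathsf{F}\colon\mathbf{Set}\to\mathbf{Set}$ a functor and $\widehat{\mathsf{F}}$ a lifting of $\mathsf{F}$ to $\mathbf{Cat}(\mathcal{V})$. Then $\widehat{\mathsf{F}}$ is induced by a lax extension of $\mathsf{F}$ to $\mathbf{Rel}(\mathcal{V})$ if and only if $\widehat{\mathsf{F}}$ preserves initial morphisms and is locally monotone.
   Context: A quantale $(\mathcal{V},\otimes,k)$ is a complete lattice with commutative monoid structure, each $u\otimes-$ preserving joins, $\hom(u,-)$ its right adjoint; non-trivial: $\bot\ne\top$. $\mathcal{V}$-categories $(X,a)$: $k\le a(x,x)$, $a(x,y)\otimes a(y,z)\le a(x,z)$; $\mathcal{V}$-functors $f\colon(X,a)\to(Y,b)$: $a(x,y)\le b(f x,f y)$; initial if equality holds. A lifting of $\mathsf{F}$ is a functor $\widehat{\mathsf{F}}$ on $\mathbf{Cat}(\mathcal{V})$ with $|\widehat{\mathsf{F}}-|=\mathsf{F}|-|$. For $\mathcal{V}$-functors $f,g\colon(X,a)\to(Y,b)$, $f\le g$ iff $k\le b(f(x),g(x))$ for all $x$; a functor is locally monotone if it preserves this order on hom-sets. $\mathcal{V}$-relations $r\colon X\nrightarrow Y$ are maps $X\times Y\to\mathcal{V}$, composed by $(s\cdot r)(x,z)=\bigvee_y r(x,y)\otimes s(y,z)$, converse $r^\circ(y,x)=r(x,y)$, functions viewed as relations with value $k$ on the graph and $\bot$ elsewhere. A lax extension of $\mathsf{F}$ assigns to each $r\colon X\nrightarrow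 Y$ a $\widehat{\mathsf{F}}r\colon\mathsf{F}X\nrightarrow\mathsf{F}Y$ such that (L1) $r\le r'\Rightarrow\widehat{\mathsf{F}}r\le\widehat{\mathsf{F}}r'$, (L2) $\widehat{\mathsf{F}}s\cdot\widehat{\mathsf{F}}r\le\widehat{\mathsf{F}}(s\cdot r)$, (L3) $\mathsf{F}f\le\widehat{\mathsf{F}}f$ and $(\mathsf{F}f)^\circ\le\widehat{\mathsf{F}}(f^\circ)$ for functions $f$. The lifting induced by a lax extension sends $(X,a)$ to $(\mathsf{F}X,\widehat{\mathsf{F}}a)$ and acts as $\mathsf{F}$ on maps. *)

(* Defs.v *)
Set Implicit Arguments.
Unset Strict Implicit.

Record quantale := Quantale {
  qcar :> Type;
  qle : qcar -> qcar -> Prop;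
  qsup : (qcar -> Prop) -> qcar;
  qtens : qcar -> qcar -> qcar;
  qk : qcar;
  qle_refl : forall u, qle u u;
  qle_trans : forall u v w, qle u v -> qle v w -> qle u w;
  qle_antisym : forall u v, qle u v -> qle v u -> u = v;
  qsup_ub : forall (S : qcar -> Prop) u, S u -> qle u (qsup S);
  qsup_least : forall (S : qcar -> Prop) w, (forall u, S u -> qle u w) -> qle (qsup S) w;
  qtens_assoc : forall u v w, qtens u (qtens v w) = qtens (qtens u v) w;
  qtens_comm : forall u v, qtens u v = qtens v u;
  qtens_unit : forall u, qtens qk u = u;
  qtens_sup : forall u (S : qcar -> Prop),
      qtens u (qsup S) = qsup (fun v => exists s, S s /\ v = qtens u s)
}.

Arguments qle {q}.
Arguments qsup {q}.
Arguments qtens {q}.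
Arguments qk {q}.

Definition qbot (V : quantale) : V := qsup (fun _ : V => False).
Definition qtop (V : quantale) : V := qsup (fun _ : V => True).
Definition nontrivial (V : quantale) : Prop := qbot V <> qtop V.

Record SetFunctor := MkSetFunctor {
  Fobj :> Type -> Type;
  Fmap : forall X Y : Type, (X -> Y) -> Fobj X -> Fobj Y;
  Fmap_id : forall (X : Type) (u : Fobj X), Fmap (fun x : X => x) u = u;
  Fmap_comp : forall (X Y Z : Type) (f : X -> Y) (g : Y -> Z) (u : Fobj X),
      Fmap (fun x => g (f x)) u = Fmap g (Fmap f u)
}.

Section Vstuff.
Variable V : quantale.

Definition Vrel (X Y : Type) := X -> Y -> V.

Definition rle X Y (r r' : Vrel X Y) : Prop := forall x y, qle (r x y) (r' x y).

Definition rcomp X Y Z (s : Vrel Y Z) (r : Vrel X Y) : Vrel X Z :=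
  fun x z => qsup (fun v => exists y, v = qtens (r x y) (s y z)).

Definition rconv X Y (r : Vrel X Y) : Vrel Y X := fun y x => r x y.

(** a function as a V-relation: value k on the graph, bottom elsewhere
    (written as the join of {k | f x = y}) *)
Definition graph X Y (f : X -> Y) : Vrel X Y :=
  fun x y => qsup (fun v => f x = y /\ v = qk).

Definition Vcat X (a : Vrel X X) : Prop :=
  (forall x, qle qk (a x x)) /\
  (forall x y z, qle (qtens (a x y) (a y z)) (a x z)).

Definition Vfun X Y (a : Vrel X X) (b : Vrel Y Y) (f : X -> Y) : Prop :=
  forall x y, qle (a x y) (b (f x) (f y)).

Definition initial X Y (a : Vrel X X) (b : Vrel Y Y) (f : X -> Y) : Prop :=
  forall x y, a x y = b (f x) (f y).

Definition fle X Y (b : Vrel Y Y) (f g : X -> Y) : Prop :=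
  forall x, qle qk (b (f x) (g x)).

End Vstuff.

(** A lifting of F to Cat(V): since it has underlying set F X and acts as F on
    maps, it is given by a structure map [L] sending a V-category structure on X
    to one on F X, such that F f is a V-functor whenever f is. *)
Definition lifting_map (V : quantale) (F : SetFunctor) :=
  forall X : Type, Vrel V X X -> Vrel V (F X) (F X).

Definition is_lifting (V : quantale) (F : SetFunctor) (L : lifting_map V F) : Prop :=
  (forall X (a : Vrel V X X), Vcat a -> Vcat (L X a)) /\
  (forall X Y (a : Vrel V X X) (b : Vrel V Y Y) (f : X -> Y),
      Vcat a -> Vcat b -> Vfun a b f -> Vfun (L X a) (L Y b) (@Fmap F _ _ f)).

Definition rel_ext_map (V : quantale) (F : SetFunctor) :=
  forall X Y : Type, Vrel V X Y -> Vrel V (F X) (F Y).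

Definition lax_extension (V : quantale) (F : SetFunctor) (E : rel_ext_map V F) : Prop :=
  (forall X Y (r r' : Vrel V X Y), rle r r' -> rle (E X Y r) (E X Y r')) /\
  (forall X Y Z (r : Vrel V X Y) (s : Vrel V Y Z),
      rle (rcomp (E Y Z s) (E X Y r)) (E X Z (rcomp s r))) /\
  (forall X Y (f : X -> Y),
      rle (graph V (@Fmap F _ _ f)) (E X Y (graph V f)) /\
      rle (rconv (graph V (@Fmap F _ _ f))) (E Y X (rconv (graph V f)))).

Definition induced_by (V : quantale) (F : SetFunctor) (L : lifting_map V F)
    (E : rel_ext_map V F) : Prop :=
  forall X (a : Vrel V X X), Vcat a -> forall u v, L X a u v = E X X a u v.

Definition preserves_initial (V : quantale) (F : SetFunctor) (L : lifting_map V F) : Prop :=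
  forall X Y (a : Vrel V X X) (b : Vrel V Y Y) (f : X -> Y),
    Vcat a -> Vcat b -> initial a b f -> initial (L X a) (L Y b) (@Fmap F _ _ f).

Definition locally_monotone (V : quantale) (F : SetFunctor) (L : lifting_map V F) : Prop :=
  forall X Y (a : Vrel V X X) (b : Vrel V Y Y) (f g : X -> Y),
    Vcat a -> Vcat b -> Vfun a b f -> Vfun a b g -> fle b f g ->
    fle (L Y b) (@Fmap F _ _ f) (@Fmap F _ _ g).

(* Main.v *)
Require Import Defs.
Set Implicit Arguments.
Unset Strict Implicit.

Section Q.
Variable V : quantale.

Lemma tens_bot_r (u : V) : qtens u (qbot V) = qbot V.
Proof.
  unfold qbot. rewrite qtens_sup. apply qle_antisym.
  - apply qsup_least. intros v [s [[] _]].
  - apply qsup_least. intros v [].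
Qed.

Lemma tens_bot_le (u w : V) : qle (qtens u (qbot V)) w.
Proof. rewrite tens_bot_r. apply qsup_least. intros v []. Qed.

Lemma bot_tens_le (u w : V) : qle (qtens (qbot V) u) w.
Proof. rewrite qtens_comm. apply tens_bot_le. Qed.

Lemma bot_le (w : V) : qle (qbot V) w.
Proof. apply qsup_least. intros v []. Qed.

Lemma tens_unit_r (u : V) : qtens u qk = u.
Proof. rewrite qtens_comm. apply qtens_unit. Qed.

Lemma tens_mono_r (u v v' : V) : qle v v' -> qle (qtens u v) (qtens u v').
Proof.
  intro H.
  assert (e : qsup (fun t : V => t = v \/ t = v') = v').
  { apply qle_antisym.
    - apply qsup_least. intros t [->| ->]; [exact H | apply qle_refl].
    - apply qsup_ub. right; reflexivity. }
  apply qle_trans with (qtens u (qsup (fun t : V => t = v \/ t = v'))).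
  2:{ rewrite e. apply qle_refl. }
  rewrite qtens_sup. apply qsup_ub.
  exists v. split; [left; reflexivity | reflexivity].
Qed.

Lemma tens_mono (u u' v v' : V) : qle u u' -> qle v v' -> qle (qtens u v) (qtens u' v').
Proof.
  intros H1 H2. apply qle_trans with (qtens u v'). apply tens_mono_r; auto.
  rewrite (qtens_comm u), (qtens_comm u'). apply tens_mono_r; auto.
Qed.

Lemma sup_tens_le (S : V -> Prop) (t w : V) :
  (forall s, S s -> qle (qtens s t) w) -> qle (qtens (qsup S) t) w.
Proof.
  intro H. rewrite qtens_comm, qtens_sup. apply qsup_least.
  intros x [s [Hs ->]]. rewrite qtens_comm. auto.
Qed.

Lemma tens_sup_le (S : V -> Prop) (t w : V) :
  (forall s, S s -> qle (qtens t s) w) -> qle (qtens t (qsup S)) w.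
Proof.
  intro H. rewrite qtens_sup. apply qsup_least.
  intros x [s [Hs ->]]. auto.
Qed.

Definition ind (P : Prop) : V := qsup (fun v => P /\ v = qk).

Lemma ind_le (P : Prop) (w : V) : (P -> qle qk w) -> qle (ind P) w.
Proof. intro H. apply qsup_least. intros v [Hp ->]. auto. Qed.

Lemma k_le_ind (P : Prop) : P -> qle qk (ind P).
Proof. intro H. apply qsup_ub. split; auto. Qed.

Lemma ind_tens_le (P : Prop) (t w : V) : (P -> qle t w) -> qle (qtens (ind P) t) w.
Proof. intro H. apply sup_tens_le. intros s [Hp ->]. rewrite qtens_unit. auto. Qed.

Lemma tens_ind_le (P : Prop) (t w : V) : (P -> qle t w) -> qle (qtens t (ind P)) w.
Proof. intro H. rewrite qtens_comm. apply ind_tens_le. auto. Qed.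

Definition disc (X : Type) : Vrel V X X := fun x y => ind (x = y).
Arguments disc X : clear implicits.

Definition col2 X Y (p : Vrel V X X) (q : Vrel V Y Y) (r : Vrel V X Y) : Vrel V (X + Y) (X + Y) :=
  fun s t => match s, t with
  | inl x, inl x' => p x x'
  | inr y, inr y' => q y y'
  | inl x, inr y => r x y
  | inr _, inl _ => qbot V
  end.

Lemma Vcat_disc X : Vcat (disc X).
Proof.
  split.
  - intro x. apply k_le_ind. reflexivity.
  - intros x y z. apply ind_tens_le. intros ->. apply qle_refl.
Qed.

Lemma Vcat_col2 X Y (p : Vrel V X X) (q : Vrel V Y Y) (r : Vrel V X Y) :
  Vcat p -> Vcat q ->
  (forall x x' y, qle (qtens (p x x') (r x' y)) (r x y)) ->
  (forall x y y', qle (qtens (r x y) (q y y')) (r x y')) ->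
  Vcat (col2 p q r).
Proof.
  intros [p1 p2] [q1 q2] H1 H2. split.
  - intros [x|y]; simpl; auto.
  - intros [x|y] [x'|y'] [x''|y'']; simpl; auto using tens_bot_le, bot_tens_le.
Qed.

Lemma Vcat_col2_disc X Y (r : Vrel V X Y) : Vcat (col2 (disc X) (disc Y) r).
Proof.
  apply Vcat_col2; try apply Vcat_disc.
  - intros. apply ind_tens_le. intros ->. apply qle_refl.
  - intros. apply tens_ind_le. intros ->. apply qle_refl.
Qed.

End Q.
Arguments disc V X : clear implicits.

Section Forward.
Variable V : quantale.
Variable F : SetFunctor.
Variable E : rel_ext_map V F.
Hypothesis HE : lax_extension E.

Lemma chain X Y Z (r : Vrel V X Y) (s : Vrel V Y Z) u v w :
  qle (qtens (@E _ _ r u v) (@E _ _ s v w)) (@E _ _ (rcomp s r) u w).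
Proof.
  destruct HE as [_ [H2 _]].
  eapply qle_trans; [| apply H2]. unfold rcomp. apply qsup_ub. exists v. reflexivity.
Qed.

Lemma E_mono X Y (r r' : Vrel V X Y) u v : rle r r' -> qle (@E _ _ r u v) (@E _ _ r' u v).
Proof. destruct HE as [H1 _]. intro H. apply H1. exact H. Qed.

Lemma k_E_graph X Y (f : X -> Y) u : qle qk (@E _ _ (graph V f) u (@Fmap F _ _ f u)).
Proof.
  destruct HE as [_ [_ H3]]. destruct (H3 X Y f) as [Ha _].
  eapply qle_trans; [| apply Ha]. apply (@k_le_ind V). reflexivity.
Qed.

Lemma k_E_conv X Y (f : X -> Y) u : qle qk (@E _ _ (rconv (graph V f)) (@Fmap F _ _ f u) u).
Proof.
  destruct HE as [_ [_ H3]]. destruct (H3 X Y f) as [_ Hb].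
  eapply qle_trans; [| apply Hb]. apply (@k_le_ind V). reflexivity.
Qed.

Lemma pad (t w : V) a b : qle qk a -> qle qk b -> qle (qtens a (qtens t b)) w -> qle t w.
Proof.
  intros Ha Hb H. eapply qle_trans; [| exact H].
  assert (e : t = qtens qk (qtens t qk)) by (rewrite qtens_unit, tens_unit_r; reflexivity).
  apply qle_trans with (qtens qk (qtens t qk)); [rewrite <- e; apply qle_refl |].
  apply tens_mono; [exact Ha |]. apply tens_mono; [apply qle_refl | exact Hb].
Qed.


Lemma fwd_le X Y (a : Vrel V X X) (b : Vrel V Y Y) (f : X -> Y) :
  (forall x y, qle (a x y) (b (f x) (f y))) ->
  forall u v, qle (@E _ _ a u v) (@E _ _ b (@Fmap F _ _ f u) (@Fmap F _ _ f v)).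
Proof.
  intros Hab u v.
  apply (pad (a:=@E _ _ (rconv (graph V f)) (@Fmap F _ _ f u) u) (b:=@E _ _ (graph V f) v (@Fmap F _ _ f v)));
    [apply k_E_conv | apply k_E_graph |].
  eapply qle_trans; [apply tens_mono; [apply qle_refl | apply chain] |].
  eapply qle_trans; [apply chain |].
  apply E_mono. intros y y'. unfold rcomp, rconv, graph.
  apply qsup_least. intros w [x ->].
  apply ind_tens_le. intros <-.
  apply qsup_least. intros w [x' ->].
  apply tens_ind_le. intros <-. apply Hab.
Qed.

Lemma fwd_ge X Y (a : Vrel V X X) (b : Vrel V Y Y) (f : X -> Y) :
  (forall x y, qle (b (f x) (f y)) (a x y)) ->
  forall u v, qle (@E _ _ b (@Fmap F _ _ f u) (@Fmap F _ _ f v)) (@E _ _ a u v).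
Proof.
  intros Hab u v.
  apply (pad (a:=@E _ _ (graph V f) u (@Fmap F _ _ f u)) (b:=@E _ _ (rconv (graph V f)) (@Fmap F _ _ f v) v));
    [apply k_E_graph | apply k_E_conv |].
  eapply qle_trans; [apply tens_mono; [apply qle_refl | apply chain] |].
  eapply qle_trans; [apply chain |].
  apply E_mono. intros x x'. unfold rcomp, rconv, graph.
  apply qsup_least. intros w [y ->].
  apply ind_tens_le. intros <-.
  apply qsup_least. intros w [y' ->].
  apply tens_ind_le. intros <-. apply Hab.
Qed.

Lemma fwd_lm X Y (b : Vrel V Y Y) (f g : X -> Y) :
  (forall x, qle qk (b (f x) (g x))) ->
  forall u, qle qk (@E _ _ b (@Fmap F _ _ f u) (@Fmap F _ _ g u)).
Proof.
  intros H u.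
  eapply qle_trans with (qtens qk qk); [rewrite qtens_unit; apply qle_refl |].
  eapply qle_trans; [apply tens_mono; [apply (k_E_conv f u) | apply (k_E_graph g u)] |].
  eapply qle_trans; [apply chain |].
  apply E_mono. intros y y'. unfold rcomp, rconv, graph.
  apply qsup_least. intros w [x ->].
  apply ind_tens_le. intros <-.
  apply ind_le. intros <-. apply H.
Qed.

End Forward.

Section Backward.
Variable V : quantale.
Variable F : SetFunctor.
Variable L : lifting_map V F.
Hypothesis HL : is_lifting L.
Hypothesis HPI : preserves_initial L.
Hypothesis HLM : locally_monotone L.

Definition Eof : rel_ext_map V F := fun X Y r u v =>
  @L (X + Y)%type (col2 (disc V X) (disc V Y) r) (@Fmap F _ _ inl u) (@Fmap F _ _ inr v).

Lemma Ltrans X (b : Vrel V X X) P Q R : Vcat b ->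
  qle (qtens (@L X b P Q) (@L X b Q R)) (@L X b P R).
Proof. intro Hb. destruct HL as [H1 _]. apply (proj2 (H1 X b Hb)). Qed.

Lemma bw_mono X Y (r r' : Vrel V X Y) : rle r r' -> rle (Eof r) (Eof r').
Proof.
  intros H u v. unfold Eof.
  pose proof (proj2 HL (X + Y)%type (X + Y)%type (col2 (disc V X) (disc V Y) r)
     (col2 (disc V X) (disc V Y) r') (fun x => x) (Vcat_col2_disc _) (Vcat_col2_disc _)) as K.
  assert (Hf : Vfun (col2 (disc V X) (disc V Y) r) (col2 (disc V X) (disc V Y) r') (fun x => x)).
  { intros [x|y] [x'|y']; simpl; auto using qle_refl. }
  specialize (K Hf (@Fmap F _ _ inl u) (@Fmap F _ _ inr v)).
  rewrite !Fmap_id in K. exact K.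
Qed.

Lemma bw_comp X Y Z (r : Vrel V X Y) (s : Vrel V Y Z) :
  rle (rcomp (Eof s) (Eof r)) (Eof (rcomp s r)).
Proof.
  intros u w. unfold rcomp at 1. apply qsup_least. intros t [v ->].
  pose (R := fun (x : X) (p : Y + Z) => match p with inl y => r x y | inr z => rcomp s r x z end).
  pose (G := col2 (disc V X) (col2 (disc V Y) (disc V Z) s) R).
  assert (VG : Vcat G).
  { apply Vcat_col2; [apply Vcat_disc | apply Vcat_col2_disc | |].
    - intros x x' [y|z]; simpl; apply ind_tens_le; intros ->; apply qle_refl.
    - intros x [y|z] [y'|z']; simpl.
      + apply tens_ind_le; intros ->; apply qle_refl.
      + unfold rcomp. apply qsup_ub. exists y. reflexivity.
      + apply tens_bot_le.
      + apply tens_ind_le; intros ->; apply qle_refl. }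
  pose (h1 := fun p : X + Y => match p with inl x => @inl X (Y + Z) x | inr y => inr (inl y) end).
  pose (h2 := fun p : Y + Z => @inr X (Y + Z) p).
  pose (h3 := fun p : X + Z => match p with inl x => @inl X (Y + Z) x | inr z => inr (inr z) end).
  assert (e1 : Eof r u v = @L _ G (@Fmap F _ _ (fun x => @inl X (Y + Z) x) u)
                                 (@Fmap F _ _ (fun y => @inr X (Y + Z) (inl y)) v)).
  { unfold Eof. rewrite (HPI (f := h1) (Vcat_col2_disc _) VG).
    - rewrite <- !Fmap_comp. reflexivity.
    - intros [x|y] [x'|y']; reflexivity. }
  assert (e2 : Eof s v w = @L _ G (@Fmap F _ _ (fun y => @inr X (Y + Z) (inl y)) v)
                                 (@Fmap F _ _ (fun z => @inr X (Y + Z) (inr z)) w)).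
  { unfold Eof. rewrite (HPI (f := h2) (Vcat_col2_disc _) VG).
    - rewrite <- !Fmap_comp. reflexivity.
    - intros [x|y] [x'|y']; reflexivity. }
  assert (e3 : Eof (rcomp s r) u w = @L _ G (@Fmap F _ _ (fun x => @inl X (Y + Z) x) u)
                                 (@Fmap F _ _ (fun z => @inr X (Y + Z) (inr z)) w)).
  { unfold Eof. rewrite (HPI (f := h3) (Vcat_col2_disc _) VG).
    - rewrite <- !Fmap_comp. reflexivity.
    - intros [x|y] [x'|y']; reflexivity. }
  rewrite e1, e2, e3. apply Ltrans. exact VG.
Qed.


Lemma bw_graph X Y (f : X -> Y) : rle (graph V (@Fmap F _ _ f)) (Eof (graph V f)).
Proof.
  intros u w. unfold graph at 1. apply ind_le. intros <-. unfold Eof.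
  assert (K := HLM (Vcat_disc V X) (Vcat_col2_disc (graph V f))
                   (f := inl) (g := fun x => @inr X Y (f x))).
  assert (H1 : Vfun (disc V X) (col2 (disc V X) (disc V Y) (graph V f)) inl).
  { intros x y. apply qle_refl. }
  assert (H2 : Vfun (disc V X) (col2 (disc V X) (disc V Y) (graph V f)) (fun x => @inr X Y (f x))).
  { intros x y. simpl. apply ind_le. intros ->. apply k_le_ind. reflexivity. }
  assert (H3 : fle (col2 (disc V X) (disc V Y) (graph V f)) inl (fun x => @inr X Y (f x))).
  { intros x. simpl. apply k_le_ind. reflexivity. }
  specialize (K H1 H2 H3 u). rewrite (@Fmap_comp F _ _ _ f inr u) in K. exact K.
Qed.

Lemma bw_conv X Y (f : X -> Y) :
  rle (rconv (graph V (@Fmap F _ _ f))) (Eof (rconv (graph V f))).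
Proof.
  intros w u. unfold rconv at 1. unfold graph at 1. apply ind_le. intros <-. unfold Eof.
  assert (K := HLM (Vcat_disc V X) (Vcat_col2_disc (rconv (graph V f)))
                   (f := fun x => @inl Y X (f x)) (g := inr)).
  assert (H1 : Vfun (disc V X) (col2 (disc V Y) (disc V X) (rconv (graph V f))) (fun x => @inl Y X (f x))).
  { intros x y. simpl. apply ind_le. intros ->. apply k_le_ind. reflexivity. }
  assert (H2 : Vfun (disc V X) (col2 (disc V Y) (disc V X) (rconv (graph V f))) inr).
  { intros x y. apply qle_refl. }
  assert (H3 : fle (col2 (disc V Y) (disc V X) (rconv (graph V f))) (fun x => @inl Y X (f x)) inr).
  { intros x. simpl. apply k_le_ind. reflexivity. }
  specialize (K H1 H2 H3 u). rewrite (@Fmap_comp F _ _ _ f inl u) in K. exact K.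
Qed.

Lemma bw_induced X (a : Vrel V X X) : Vcat a -> forall u v, @L X a u v = Eof a u v.
Proof.
  intros Ha u v. destruct Ha as [Ha1 Ha2]. apply qle_antisym.
  - pose (R := fun (x : X) (p : X + X) => match p with inl y => a x y | inr z => a x z end).
    pose (G := col2 (disc V X) (col2 a (disc V X) a) R).
    assert (VG : Vcat G).
    { apply Vcat_col2; [apply Vcat_disc | apply Vcat_col2; [split; auto | apply Vcat_disc | auto |] | |].
      - intros x y y'. apply tens_ind_le; intros ->; apply qle_refl.
      - intros x x' [y|z]; simpl; apply ind_tens_le; intros ->; apply qle_refl.
      - intros x [y|z] [y'|z']; simpl.
        + apply Ha2.
        + apply Ha2.
        + apply tens_bot_le.
        + apply tens_ind_le; intros ->; apply qle_refl. }
    pose (h3 := fun p : X + X => match p with inl x => @inl X (X + X) x | inr z => inr (inr z) end).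
    pose (i2 := fun x : X => @inr X (X + X) (inl x)).
    assert (e1 : Eof a u v = @L _ G (@Fmap F _ _ (fun x => @inl X (X + X) x) u)
                                 (@Fmap F _ _ (fun z => @inr X (X + X) (inr z)) v)).
    { unfold Eof. rewrite (HPI (f := h3) (Vcat_col2_disc _) VG).
      - rewrite <- !Fmap_comp. reflexivity.
      - intros [x|y] [x'|y']; reflexivity. }
    assert (e2 : @L X a u v = @L _ G (@Fmap F _ _ i2 u) (@Fmap F _ _ i2 v)).
    { apply (HPI (f := i2) (conj Ha1 Ha2) VG). intros x y. reflexivity. }
    assert (Vd : forall g : X -> X + (X + X), (forall x y, qle (disc V X x y) (G (g x) (g y))) ->
                 Vfun (disc V X) G g) by (intros g Hg; exact Hg).
    assert (K1 := HLM (Vcat_disc V X) VG (f := fun x => @inl X (X + X) x) (g := i2)).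
    assert (K2 := HLM (Vcat_disc V X) VG (f := i2) (g := fun z => @inr X (X + X) (inr z))).
    assert (V1 : Vfun (disc V X) G (fun x => @inl X (X + X) x)) by (intros x y; apply qle_refl).
    assert (V2 : Vfun (disc V X) G i2).
    { intros x y. simpl. apply ind_le. intros ->. apply Ha1. }
    assert (V3 : Vfun (disc V X) G (fun z => @inr X (X + X) (inr z))) by (intros x y; apply qle_refl).
    specialize (K1 V1 V2 (fun x => Ha1 x) u).
    specialize (K2 V2 V3 (fun x => Ha1 x) v).
    rewrite e1, e2.
    eapply qle_trans; [| apply (@Ltrans _ G _ (@Fmap F _ _ i2 v) _ VG)].
    eapply qle_trans; [| apply tens_mono; [apply (@Ltrans _ G _ (@Fmap F _ _ i2 u) _ VG) | exact K2]].
    rewrite tens_unit_r.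
    eapply qle_trans; [| apply tens_mono; [exact K1 | apply qle_refl]].
    rewrite qtens_unit. apply qle_refl.
  - unfold Eof.
    pose (nab := fun p : X + X => match p with inl x => x | inr x => x end).
    assert (K := proj2 HL _ _ _ _ nab (Vcat_col2_disc a) (conj Ha1 Ha2)).
    assert (Hf : Vfun (col2 (disc V X) (disc V X) a) a nab).
    { intros [x|y] [x'|y']; simpl.
      - apply ind_le. intros ->. apply Ha1.
      - apply qle_refl.
      - apply bot_le.
      - apply ind_le. intros ->. apply Ha1. }
    specialize (K Hf (@Fmap F _ _ inl u) (@Fmap F _ _ inr v)).
    rewrite <- !Fmap_comp in K. rewrite !Fmap_id in K. exact K.
Qed.

End Backward.

Theorem theorem7 (V : quantale) (F : SetFunctor) (L : lifting_map V F) :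
  nontrivial V -> is_lifting L ->
  ((exists E : rel_ext_map V F, lax_extension E /\ induced_by L E) <->
   (preserves_initial L /\ locally_monotone L)).
Proof.
  intros _ HL. split.
  - intros [E [HE Hind]]. split.
    + intros X Y a b f Ha Hb Hi u v. rewrite (Hind _ _ Ha), (Hind _ _ Hb).
      apply qle_antisym.
      * apply fwd_le; auto. intros x y. rewrite Hi. apply qle_refl.
      * apply fwd_ge; auto. intros x y. rewrite Hi. apply qle_refl.
    + intros X Y a b f g Ha Hb _ _ Hfg u. rewrite (Hind _ _ Hb).
      apply fwd_lm; auto.
  - intros [HPI HLM]. exists (Eof L). split.
    + split; [| split].
      * intros X Y r r' H. apply bw_mono; auto.
      * intros X Y Z r s. apply bw_comp; auto.
      * intros X Y f. split; [apply bw_graph | apply bw_conv]; auto.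
    + intros X a Ha u v. apply bw_induced; auto.
Qed.
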